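(* Let $p$ be a prime and let $\alpha_1,\dots,\alpha_k,\beta_1,\dots,\beta_k\in\overline{\mathbb{F}}_p$. Assume that for each $i\in\{1,\dots,k\}$ one of the following holds: (a) $\alpha_i-\beta_i\in\mathbb{F}_p$ and $[\alpha_i-\beta_i]\le[\alpha_j-\beta_l]$ for all $j,l\ge i$ with $\alpha_j-\beta_l\in\mathbb{F}_p$; or (b) $\alpha_j-\beta_l\notin\mathbb{F}_p$ for all $j,l\ge i$. Then the $Y(\mathfrak{gl}_2)$-module $L(\alpha_1,\beta_1,p)\otimes\dots\otimes L(\alpha_k,\beta_k,p)$ is irreducible.
   Context: For $x\in\mathbb{F}_p$, $[x]$ denotes the least nonnegative integer whose residue mod $p$ is $x$. For $\alpha,\beta\in\overline{\mathbb{F}}_p$, $L(\alpha,\beta,p)$ is the irreducible quotient of the $\mathfrak{gl}_2$-Verma module over $\overline{\mathbb{F}}_p$ generated by $v$ with $E_{11}v=\alpha v$, $E_{22}v=\beta v$, $E_{12}v=0$; it is regarded as a module over the Yangian $Y(\mathfrak{gl}_2)$ (generators $t_{ij}^{(r)}$, $t_{ij}(u)=\delta_{ij}+\sum_{r\ge1}t_{ij}^{(r)}u^{-r}$, RTT relations) via the evaluation homomorphism $t_{ij}(u)\mapsto\delta_{ij}+E_{ij}u^{-1}$. Tensor products of $Y(\mathfrak{gl}_2)$-modules are taken via the coproduct $\Delta(t_{ij}(u))=\sum_{a}t_{ia}(u)\otimes t_{aj}(u)$. *)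

(* Defs.v *)
From HB Require Import structures.
From mathcomp Require Import all_boot all_order all_algebra.
From mathcomp Require Import mxtens.
Set Implicit Arguments. Unset Strict Implicit. Unset Printing Implicit Defensive.
Import GRing.Theory.
Local Open Scope ring_scope.

Section Yangian.
Variable F : fieldType.

(* x lies in the prime field F_p (= image of the integers), tested via the
   residues 0..p-1 (correct when F has characteristic p). *)
Definition in_Fp (p : nat) (x : F) : bool := has (fun n : nat => n%:R == x) (iota 0 p).

Definition Fp_rep (p : nat) (x : F) : nat := find (fun n : nat => n%:R == x) (iota 0 p).

(* A representation of Y(gl_2) on F^d : the operators t_ij^{(r)} (r >= 1),
   i,j in 'I_2 (index 0 <-> 1, index 1 <-> 2), as d x d matrices acting on
   column vectors.  The value at r = 0 is irrelevant. *)
Record YRep := { ydim : nat; yop : nat -> 'I_2 -> 'I_2 -> 'M[F]_ydim }.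

Definition ytfull (V : YRep) (r : nat) (i j : 'I_2) : 'M[F]_(ydim V) :=
  if r is 0 then (i == j)%:R%:M else yop V r i j.

(* Tensor product via the coproduct
   Delta(t_ij^{(r)}) = sum_a sum_{s=0}^r t_ia^{(s)} (x) t_aj^{(r-s)}. *)
Definition ytens (V W : YRep) : YRep :=
  {| ydim := (ydim V * ydim W)%N;
     yop := fun r i j =>
       \sum_(a < 2) \sum_(s < r.+1) (ytfull V s i a *t ytfull W (r - s) a j) |}.

(* The trivial (counit) module: t_ij(u) = delta_ij on F^1. *)
Definition ytriv : YRep := {| ydim := 1%N; yop := fun _ _ _ => 0 |}.

(* Irreducible: nonzero, and every subspace (row space of U, whose rows are
   the transposed vectors) stable under all t_ij^{(r)}, r >= 1, is 0 or everything. *)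
Definition yirreducible (V : YRep) : Prop :=
  (0 < ydim V)%N /\
  forall U : 'M[F]_(ydim V),
    (forall (r : nat) (i j : 'I_2), (0 < r)%N -> (U *m (yop V r i j)^T <= U)%MS) ->
    U = 0 \/ row_full U.

(* The irreducible gl_2-module L(alpha, beta, p): basis v_0, ..., v_{d-1},
   d = [alpha - beta] + 1 if alpha - beta in F_p, d = p otherwise;
   E11 v_n = (alpha - n) v_n, E22 v_n = (beta + n) v_n, E21 v_n = v_{n+1}
   (v_d = 0), E12 v_n = n (alpha - beta - n + 1) v_{n-1}.
   Matrix entry (m, n) = coefficient of v_m in E v_n. *)
Definition Ldim (p : nat) (a b : F) : nat :=
  if in_Fp p (a - b) then (Fp_rep p (a - b)).+1 else p.

Definition glmat (d : nat) (a b : F) (i j : 'I_2) : 'M[F]_d :=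
  \matrix_(m < d, n < d)
    match val i, val j with
    | 0, 0 => if m == n then a - n%:R else 0
    | 1, 1 => if m == n then b + n%:R else 0
    | 1, 0 => if m == n.+1 :> nat then 1 else 0
    | _, _ => if n == m.+1 :> nat then n%:R * (a - b - n%:R + 1) else 0
    end.

(* Evaluation module: t_ij(u) = delta_ij + E_ij u^{-1}. *)
Definition Lmod (p : nat) (a b : F) : YRep :=
  {| ydim := Ldim p a b;
     yop := fun r i j => if r == 1%N then glmat (Ldim p a b) a b i j else 0 |}.

(* L(a_1,b_1) (x) ... (x) L(a_k,b_k) (the trailing trivial module is the
   unit for the tensor product). *)
Definition Ltensor (p k : nat) (alpha beta : 'I_k -> F) : YRep :=
  foldr ytens ytriv [seq Lmod p (alpha i) (beta i) | i <- enum 'I_k].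

End Yangian.

(* Main.v *)
Require Import Defs.
From HB Require Import structures.
From mathcomp Require Import all_boot all_order all_algebra.
From mathcomp Require Import mxtens.
From mathcomp Require Import zify ring.
From Stdlib Require Import Classical.
Import GRing.Theory.
Local Open Scope ring_scope.

Module Aux.
Set Implicit Arguments. Unset Strict Implicit. Unset Printing Implicit Defensive.

Section Gen.
Variable F : fieldType.

Lemma sum_tens m n (G : 'I_(m * n) -> F) :
  \sum_k G k = \sum_(i < m) \sum_(j < n) G (mxtens_index (i, j)).
Proof.
rewrite pair_big /=.
rewrite (reindex (fun p : 'I_m * 'I_n => mxtens_index p)) /=.
  by apply: eq_bigr => -[i j].
by exists (@mxtens_unindex m n) => x _; [apply: mxtens_indexK | apply: mxtens_unindexK].
Qed.

Lemma sum2 (G : 'I_2 -> F) : \sum_(a < 2) G a = G ord0 + G ord_max.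
Proof. rewrite big_ord_recl big_ord1; congr (_ + G _); exact: val_inj. Qed.

Lemma sum_neq0 (I : finType) (G : I -> F) : \sum_i G i != 0 -> exists i, G i != 0.
Proof.
move=> H; apply/existsP; apply: contraR H; rewrite negb_exists => /forallP H.
by rewrite big1 // => i _; apply/eqP; move: (H i); rewrite negbK.
Qed.

Definition Pol (s : seq F) : {poly F} := \prod_(b <- s) (1 + b%:P * 'X).

Lemma Pol_cons b s : Pol (b :: s) = (1 + b%:P * 'X) * Pol s.
Proof. by rewrite /Pol big_cons. Qed.

Lemma coef_fac (b : F) (P : {poly F}) r :
  ((1 + b%:P * 'X) * P)`_r = P`_r + (if r is r'.+1 then b * P`_r' else 0).
Proof.
rewrite mulrDl mul1r coefD -mulrA coefCM coefXM.
by case: r => [|r] //=; rewrite mulr0.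
Qed.

Lemma Pol_coef0 s : (Pol s)`_0 = 1.
Proof.
elim: s => [|b s IH]; first by rewrite /Pol big_nil coefC.
by rewrite Pol_cons coef_fac IH addr0.
Qed.

Lemma fac_size (b : F) : (size ((1 + b%:P * 'X)%R : {poly F}) <= 2)%N.
Proof.
rewrite addrC -polyC1 size_MXaddC.
case: ifP => // _; rewrite ltnS; exact: size_polyC_leq1.
Qed.

Lemma Pol_size s : (size (Pol s) <= (size s).+1)%N.
Proof.
elim: s => [|b s IH]; first by rewrite /Pol big_nil size_poly1.
rewrite Pol_cons /=.
apply: leq_trans (size_polyMleq _ _) _.
have := fac_size b; lia.
Qed.

Lemma Pol_top s : (Pol s)`_(size s) = \prod_(b <- s) b.
Proof.
elim: s => [|b s IH]; first by rewrite /Pol !big_nil coefC.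
rewrite Pol_cons coef_fac /= IH big_cons.
have -> : (Pol s)`_(size s).+1 = 0 by apply: nth_default; apply: Pol_size.
by rewrite add0r.
Qed.

Lemma Pol_horner s x : (Pol s).[x] = \prod_(b <- s) (1 + b * x).
Proof.
elim: s => [|b s IH]; first by rewrite /Pol !big_nil hornerC.
by rewrite Pol_cons big_cons hornerM IH hornerD hornerC hornerMX hornerC.
Qed.

Lemma root_lemma (s : seq F) (h : nat -> F) (g kap : F) :
  h 0%N = 0 -> (forall r, (size s < r)%N -> h r = 0) ->
  (forall r, h r.+1 + g * h r + kap * (Pol s)`_r = 0) ->
  kap = 0 \/ g \in s.
Proof.
move=> h0 hbig hrec.
pose H : {poly F} := \poly_(r < size s) h r.+1.
have Hc r : H`_r = h r.+1.
  rewrite coef_poly; case: ltnP => // hr; rewrite hbig //.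
have eq1 : (1 + g%:P * 'X) * H = - (kap *: Pol s).
  apply/polyP => r; rewrite coef_fac coefN coefZ Hc.
  have hr := hrec r.
  case: r hr => [|r] hr /=.
    rewrite h0 mulr0 addr0 in hr.
    by rewrite addr0; apply/eqP; rewrite -addr_eq0 hr.
  by rewrite Hc; apply/eqP; rewrite -addr_eq0 hr.
have [kap0|kapn0] := eqVneq kap 0; first by left.
right.
have [g0|gn0] := eqVneq g 0.
  move: eq1; rewrite g0 mul0r addr0 mul1r => eq1.
  have := congr1 (fun P : {poly F} => P`_(size s)) eq1.
  rewrite /= coefN coefZ Pol_top Hc hbig // => /eqP.
  rewrite eq_sym oppr_eq0 mulf_eq0 (negPf kapn0) /=.
  rewrite prodf_seq_eq0 => /hasP [b bs /= /eqP b0].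
  by rewrite -b0.
have := congr1 (fun P : {poly F} => P.[- g^-1]) eq1.
rewrite /= hornerM hornerD hornerC hornerMX hornerC mulrN mulfV // subrr mul0r.
rewrite hornerN hornerZ Pol_horner => /eqP.
rewrite eq_sym oppr_eq0 mulf_eq0 (negPf kapn0) /=.
rewrite prodf_seq_eq0 => /hasP [b bs /= /eqP hb].
move: hb; rewrite mulrN => /eqP; rewrite subr_eq0 => /eqP h1.
have : g = b.
  by move/(congr1 (fun x => x * g)): h1; rewrite mul1r -mulrA mulVf // mulr1.
by move=> ->.
Qed.
End Gen.

Section Irr.
Variable F : fieldType.

Definition i0 : 'I_2 := ord0.
Definition i1 : 'I_2 := ord_max.

Record good (V : YRep F) (al be : seq F) (deg : 'I_(ydim V) -> nat) (x0 : 'I_(ydim V)) : Prop := Good {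
  g_size : size al = size be;
  g_bound : forall r i j, (size be < r)%N -> yop V r i j = 0;
  g_grade : forall r i j x y, ytfull V r i j x y != 0 -> (deg x + j = deg y + i)%N;
  g_x0 : deg x0 = 0%N;
  g_eig2 : forall r x, ytfull V r i1 i1 x x0 = (x == x0)%:R * (Pol be)`_r;
  g_eig1 : forall r y, ytfull V r i0 i0 x0 y = (y == x0)%:R * (Pol al)`_r;
  g_A : forall w : 'cV_(ydim V), (forall r, yop V r.+1 i0 i1 *m w = 0) ->
          forall y, y != x0 -> w y 0 = 0;
  g_B : forall phi : 'rV_(ydim V), (forall r, phi *m yop V r.+1 i1 i0 = 0) ->
          forall y, y != x0 -> phi 0 y = 0 }.

Lemma mx_neq0 m n (A : 'M[F]_(m,n)) : A != 0 -> exists i j, A i j != 0.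
Proof.
move=> H.
have : ~~ [forall i, forall j, A i j == 0].
  apply: contra H => /forallP h; apply/eqP/matrixP => i j; rewrite mxE.
  exact/eqP/(forallP (h i) j).
by move=> /forallPn [i /forallPn [j hj]]; exists i, j.
Qed.

Lemma nil_sing n m (U : 'M[F]_(m,n)) (N : nat -> 'M[F]_n) (deg : 'I_n -> nat) :
  (forall r x y, N r x y != 0 -> (deg x < deg y)%N) ->
  (forall r, (U *m (N r)^T <= U)%MS) ->
  U != 0 ->
  exists v : 'rV_n, [/\ (v <= U)%MS, v != 0 & forall r, v *m (N r)^T = 0].
Proof.
move=> hN hU Un0.
suff main : forall B (v : 'rV_n), (v <= U)%MS -> v != 0 ->
    (forall y, v 0 y != 0 -> (deg y < B)%N) ->
    exists v : 'rV_n, [/\ (v <= U)%MS, v != 0 & forall r, v *m (N r)^T = 0].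
  have [i [j hij]] := mx_neq0 Un0.
  apply: (main (\max_y deg y).+1 (row i U)); first exact: row_sub.
    by apply/negP => /eqP/matrixP/(_ 0 j); rewrite !mxE => hh; rewrite hh eqxx in hij.
  by move=> y _; rewrite ltnS; apply: (leq_bigmax y).
elim=> [|B IH] v vU vn0 hs.
  by have [i [y hy]] := mx_neq0 vn0; have := hs y; rewrite (ord1 i) in hy; move/(_ hy).
have [all0|] := classic (forall r, v *m (N r)^T = 0); first by exists v.
move=> /not_all_ex_not [r hr].
apply: (IH (v *m (N r)^T)).
- exact: submx_trans (submxMr _ vU) (hU r).
- by apply/eqP.
move=> x; rewrite mxE => /sum_neq0 [y]; rewrite mxE mulf_eq0 negb_or => /andP [h1 h2].
have := hN r x y h2; have := hs y; move/(_ h1); lia.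
Qed.

Lemma good_irr V al be deg x0 : @good V al be deg x0 -> yirreducible V.
Proof.
move=> G; split; first by move: (ltn_ord x0); lia.
move=> U stab.
have [U0|Un0] := eqVneq U 0; first by left.
right.
have gr1 : forall r x y, yop V r.+1 i0 i1 x y != 0 -> (deg x < deg y)%N.
  by move=> r x y h; have := g_grade G (r := r.+1) h; rewrite /= addn0; lia.
have [v [vU vn0 vsing]] := nil_sing gr1 (fun r => stab r.+1 i0 i1 isT) Un0.
have vz y : y != x0 -> v 0 y = 0.
  move=> yn; have := g_A G (w := v^T) _ yn; rewrite mxE; apply => r.
  by rewrite -[yop V _ _ _]trmxK -trmx_mul vsing trmx0.
have vx0 : v 0 x0 != 0.
  apply: contra vn0 => /eqP h; apply/eqP/matrixP => i y; rewrite (ord1 i) mxE.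
  by have [->|yn] := eqVneq y x0; [rewrite h | rewrite vz].
pose xi : 'rV[F]_(ydim V) := delta_mx 0 x0.
have xiU : (xi <= U)%MS.
  have -> : xi = (v 0 x0)^-1 *: v.
    apply/matrixP => i y; rewrite (ord1 i) !mxE eqxx /=.
    have [->|yn] := eqVneq y x0; first by rewrite mulVf.
    by rewrite (vz y yn) mulr0.
  exact: scalemx_sub.
apply/idPn => nfull.
have Kn0 : kermx U^T != 0.
  by rewrite kermx_eq0 /row_free mxrank_tr.
have gr2 : forall r x y, (yop V r.+1 i1 i0)^T x y != 0 -> (deg x < deg y)%N.
  by move=> r x y; rewrite mxE => h; have := g_grade G (r := r.+1) h; rewrite /= addn0; lia.
have st2 : forall r, (kermx U^T *m ((yop V r.+1 i1 i0)^T)^T <= kermx U^T)%MS.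
  move=> r; rewrite trmxK; apply/sub_kermxP.
  move/submxP: (stab r.+1 i1 i0 isT) => [M hM].
  have e : yop V r.+1 i1 i0 *m U^T = U^T *m M^T.
    by rewrite -trmx_mul -hM trmx_mul trmxK.
  by rewrite -mulmxA e mulmxA mulmx_ker mul0mx.
have [phi [phiK phin0 phising]] := nil_sing gr2 st2 Kn0.
have phiz y : y != x0 -> phi 0 y = 0.
  by move=> yn; apply: (g_B G) yn => r; rewrite -[X in _ *m X]trmxK phising.
have phix0 : phi 0 x0 != 0.
    apply: contra phin0 => /eqP h; apply/eqP/matrixP => i y; rewrite (ord1 i) mxE.
    by have [->|yn] := eqVneq y x0; [rewrite h | rewrite phiz].
  move/submxP: xiU => [D hD].
  have : phi *m xi^T = 0.
    by rewrite hD trmx_mul mulmxA (sub_kermxP phiK) mul0mx.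
  move/matrixP/(_ 0 0); rewrite !mxE (bigD1 x0) //= big1.
    by rewrite /xi !mxE !eqxx mulr1 addr0 => h; rewrite h eqxx in phix0.
  by move=> y yn; rewrite /xi !mxE (negPf yn) andbF mulr0.
Qed.

End Irr.

Section Helpers.
Variable F : fieldType.
Lemma addmxE' m n (A B : 'M[F]_(m, n)) i j : (A + B) i j = A i j + B i j.
Proof. by rewrite mxE. Qed.
Lemma scalemxE' m n (c : F) (A : 'M[F]_(m, n)) i j : (c *: A) i j = c * A i j.
Proof. by rewrite mxE. Qed.
Lemma sing_col n (T : nat -> 'M[F]_n) (v : 'cV_n) (g : F) :
  T 0%N = 0 -> (forall r, T r.+1 *m v + g *: (T r *m v) = 0) -> forall r, T r.+1 *m v = 0.
Proof.
move=> T0 h; elim=> [|r IH]; first by have := h 0%N; rewrite T0 mul0mx scaler0 addr0.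
by have := h r.+1; rewrite IH scaler0 addr0.
Qed.
Lemma sing_row n (T : nat -> 'M[F]_n) (v : 'rV_n) (g : F) :
  T 0%N = 0 -> (forall r, v *m T r.+1 + g *: (v *m T r) = 0) -> forall r, v *m T r.+1 = 0.
Proof.
move=> T0 h; elim=> [|r IH]; first by have := h 0%N; rewrite T0 mulmx0 scaler0 addr0.
by have := h r.+1; rewrite IH scaler0 addr0.
Qed.
Lemma yf_off (V : YRep F) i j : i != j -> ytfull V 0 i j = 0.
Proof. by move/negPf => h; apply/matrixP => x y; rewrite /= h !mxE mul0rn. Qed.
End Helpers.

Section Step.
Variable F : fieldType.
Variables (p : nat) (a b : F).
Local Notation d := (Ldim p a b).
Local Notation L := (Lmod p a b).
Local Notation G := (glmat d a b).

Lemma G00 (x y : 'I_d) : G i0 i0 x y = if (y : nat) == x then a - (y : nat)%:R else 0.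
Proof. by rewrite mxE /= eq_sym. Qed.
Lemma G11 (x y : 'I_d) : G i1 i1 x y = if (y : nat) == x then b + (y : nat)%:R else 0.
Proof. by rewrite mxE /= eq_sym. Qed.
Lemma G10 (x y : 'I_d) : G i1 i0 x y = if (x : nat) == y.+1 then 1 else 0.
Proof. by rewrite mxE. Qed.
Lemma G01 (x y : 'I_d) : G i0 i1 x y =
  if (y : nat) == x.+1 then (y : nat)%:R * (a - b - (y : nat)%:R + 1) else 0.
Proof. by rewrite mxE. Qed.

Lemma I2P (i : 'I_2) : i = i0 \/ i = i1.
Proof. by case: i => [[|[|]]] // h; [left|right]; apply: val_inj. Qed.

Lemma G_grade i c (x y : 'I_d) : G i c x y != 0 -> ((x : nat) + c = y + i)%N.
Proof.
case: (I2P i) => ->; case: (I2P c) => ->;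
  rewrite ?G00 ?G11 ?G10 ?G01 /=; (case: ifP => [/eqP h _|_]; [lia | by rewrite eqxx]).
Qed.

Variable W : YRep F.

Lemma ytensL r i j x1 x2 y1 y2 :
  ytfull (ytens L W) r.+1 i j (mxtens_index (x1, x2)) (mxtens_index (y1, y2)) =
  (x1 == y1)%:R * ytfull W r.+1 i j x2 y2 +
  \sum_(c < 2) G i c x1 y1 * ytfull W r c j x2 y2.
Proof.
rewrite /= summxE.
rewrite (eq_bigr (fun c : 'I_2 => (i == c)%:R * (x1 == y1)%:R * ytfull W r.+1 c j x2 y2
            + G i c x1 y1 * ytfull W r c j x2 y2)); last first.
  move=> c _; rewrite summxE big_ord_recl big_ord_recl big1 ?addr0; last first.
    by move=> s _; rewrite /= tens0mx mxE.
  rewrite !tensmxE /bump /= subn0 subn1 /=.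
  by rewrite mxE mulr_natr.
rewrite big_split /=; congr (_ + _).
rewrite (bigD1 i) //= big1 ?addr0 ?eqxx ?mul1r //.
by move=> c /negPf; rewrite eq_sym => ->; rewrite !mul0r.
Qed.


Lemma yf0 (V : YRep F) i j x y : ytfull V 0 i j x y != 0 -> x = y /\ i = j.
Proof.
rewrite /= mxE; case: (x =P y) => [->|_]; last by rewrite mulr0n eqxx.
by case: (i =P j) => [->|_] //; rewrite mul0rn eqxx.
Qed.

Variables (al be : seq F) (degW : 'I_(ydim W) -> nat) (x0W : 'I_(ydim W)).
Hypothesis GW : @good F W al be degW x0W.
Hypothesis Hd : (0 < d)%N.
Local Notation o := (Ordinal Hd).
Local Notation x0T := (mxtens_index (o, x0W)).
Definition tdeg (k : 'I_(d * ydim W)) : nat :=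
  ((mxtens_unindex k).1 : nat) + degW (mxtens_unindex k).2.

Lemma W01 r x : ytfull W r i0 i1 x x0W = 0.
Proof.
apply/eqP; apply/negP => /negP h; have := g_grade GW h.
by rewrite (g_x0 GW) /=; lia.
Qed.

Lemma W10 r y : ytfull W r i1 i0 x0W y = 0.
Proof.
apply/eqP; apply/negP => /negP h; have := g_grade GW h.
by rewrite (g_x0 GW) /=; lia.
Qed.

Lemma Wbound r i j : (size be < r)%N -> ytfull W r i j = 0.
Proof. by case: r => // r h; apply: (g_bound GW). Qed.

Lemma tbound r i j : (size (b :: be) < r)%N -> yop (ytens L W) r i j = 0.
Proof.
move=> hr /=; apply: big1 => c _; apply: big1 => -[s hs] _ /=.
case: s hs => [|[|s]] hs /=.
- by rewrite Wbound ?tensmx0 //=; move: hr => /=; lia.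
- by rewrite Wbound ?tensmx0 //=; move: hr => /=; lia.
- by rewrite tens0mx.
Qed.

Lemma tgrade r i j x y : ytfull (ytens L W) r i j x y != 0 -> (tdeg x + j = tdeg y + i)%N.
Proof.
case: r => [|r]; first by move/yf0 => [-> ->].
case: (mxtens_indexP x) => x1 x2; case: (mxtens_indexP y) => y1 y2.
rewrite ytensL /tdeg !mxtens_indexK /=.
move=> h; have [h1|h2] : ((x1 == y1)%:R * ytfull W r.+1 i j x2 y2 != 0) \/
    (\sum_(c < 2) G i c x1 y1 * ytfull W r c j x2 y2 != 0).
  have [e|e] := eqVneq ((x1 == y1)%:R * ytfull W r.+1 i j x2 y2) 0; last by left.
  by right; rewrite e add0r in h.
- move: h1; case: (x1 =P y1) => [->|_]; last by rewrite mul0r eqxx.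
  by rewrite mul1r => /(g_grade GW); lia.
- have [c] := sum_neq0 h2; rewrite mulf_eq0 negb_or => /andP [g1 g2].
  have := G_grade g1; have := g_grade GW g2; lia.
Qed.

Lemma teig2 r x : ytfull (ytens L W) r i1 i1 x x0T = (x == x0T)%:R * (Pol (b :: be))`_r.
Proof.
case: r => [|r]; first by rewrite /= mxE Pol_coef0 mulr1.
case: (mxtens_indexP x) => x1 x2.
rewrite ytensL sum2 W01 mulr0 add0r.
rewrite (inj_eq (can_inj (@mxtens_indexK _ _))) xpair_eqE Pol_cons coef_fac.
rewrite (g_eig2 GW) G11 /=.
case: (x1 =P o) => [->|/eqP hx1] /=; last first.
  have -> : ((o : nat) == x1) = false by apply/negP => /eqP h; case/eqP: hx1; apply: val_inj.
  by rewrite /= ; ring.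
rewrite (g_eig2 GW r) addr0 mul1r; ring.
Qed.

Lemma teig1 r y : ytfull (ytens L W) r i0 i0 x0T y = (y == x0T)%:R * (Pol (a :: al))`_r.
Proof.
case: r => [|r]; first by rewrite /= mxE Pol_coef0 mulr1 eq_sym.
case: (mxtens_indexP y) => y1 y2.
rewrite ytensL sum2 W10 mulr0 addr0.
rewrite (inj_eq (can_inj (@mxtens_indexK _ _))) xpair_eqE Pol_cons coef_fac.
rewrite (g_eig1 GW r.+1) (g_eig1 GW r) G00 /=.
case: (y1 =P o) => [->|/eqP hy1] /=; last first.
  have -> : ((y1 : nat) == o) = false by apply/negP => /eqP h; case/eqP: hy1; apply: val_inj.
  have -> : (o == y1) = false by rewrite eq_sym; apply/negP => /eqP h; case/eqP: hy1.
  by rewrite /=; ring.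
by rewrite /=; ring.
Qed.

Definition cc (n : nat) : F := n%:R * (a - b - n%:R + 1).

Lemma sel_sum (f : 'I_d -> F) (phi : nat -> F) (X : F) n :
  \sum_(m < d) ((if (m : nat) == n then phi (m : nat) else 0) * X) * f m =
  phi n * X * \sum_(m < d | (m : nat) == n) f m.
Proof.
rewrite (big_mkcond (fun m : 'I_d => (m : nat) == n)) mulr_sumr; apply: eq_bigr => m _.
by case: eqP => [->|] //; rewrite !mul0r mulr0.
Qed.

Lemma eq_ordnat (m' m : 'I_d) : (m' == m) = ((m : nat) == m').
Proof. by rewrite eq_sym. Qed.

Lemma innerA (m' : 'I_d) (A B C : F) (f : 'I_d -> F) :
  \sum_(m < d) ((m' == m)%:R * A + (G i0 i0 m' m * B + G i0 i1 m' m * C)) * f m =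
  A * \sum_(m < d | (m : nat) == m') f m + (a - (m' : nat)%:R) * (B * \sum_(m < d | (m : nat) == m') f m)
  + cc m'.+1 * (C * \sum_(m < d | (m : nat) == m'.+1) f m).
Proof.
rewrite (eq_bigr (fun m : 'I_d =>
   ((if (m : nat) == m' then (fun _ => 1) (m : nat) else 0) * A) * f m +
   ((if (m : nat) == m' then (fun n : nat => a - n%:R) (m : nat) else 0) * B) * f m +
   ((if (m : nat) == m'.+1 then cc (m : nat) else 0) * C) * f m)); last first.
  move=> m _; rewrite G00 G01 eq_ordnat /cc.
  by case: eqP => _ /=; case: eqP => _ /=; ring.
rewrite !big_split /= (sel_sum _ (fun _ => 1)) (sel_sum _ (fun n : nat => a - n%:R)) sel_sum; ring.
Qed.

Hypothesis Hc : forall m, (0 < m < d)%N -> cc m != 0.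
Hypothesis HA : forall m, (m.+1 < d)%N -> a - m%:R \notin be.
Section PartA.
Variable w : 'cV[F]_(d * ydim W).
Definition wv (n : nat) : 'cV_(ydim W) :=
  \col_y \sum_(m < d | (m : nat) == n) w (mxtens_index (m, y)) 0.

Lemma keyA r (m' : 'I_d) y' :
  (yop (ytens L W) r.+1 i0 i1 *m w) (mxtens_index (m', y')) 0 =
  (ytfull W r.+1 i0 i1 *m wv m') y' 0 + (a - (m' : nat)%:R) * (ytfull W r i0 i1 *m wv m') y' 0
  + cc m'.+1 * (ytfull W r i1 i1 *m wv m'.+1) y' 0.
Proof.
rewrite mxE sum_tens exchange_big /=.
rewrite (eq_bigr (fun y => ytfull W r.+1 i0 i1 y' y * wv m' y 0 +
   (a - (m' : nat)%:R) * (ytfull W r i0 i1 y' y * wv m' y 0) +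
   cc m'.+1 * (ytfull W r i1 i1 y' y * wv m'.+1 y 0))); last first.
  move=> y _.
  rewrite (eq_bigr (fun m : 'I_d => ((m' == m)%:R * ytfull W r.+1 i0 i1 y' y +
     (G i0 i0 m' m * ytfull W r i0 i1 y' y + G i0 i1 m' m * ytfull W r i1 i1 y' y)) *
     w (mxtens_index (m, y)) 0)); last first.
    by move=> m _; rewrite (ytensL r) sum2.
  by rewrite innerA !mxE.
rewrite !big_split /= !mxE -!mulr_sumr.
done.
Qed.


Lemma wv_big n : (d <= n)%N -> wv n = 0.
Proof.
move=> hn; apply/matrixP => y j; rewrite !mxE big_pred0 // => m.
apply/negbTE; rewrite neq_ltn; apply/orP; left; exact: leq_trans (ltn_ord m) hn.
Qed.

Lemma wv_entry (m : 'I_d) y : wv m y 0 = w (mxtens_index (m, y)) 0.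
Proof. by rewrite mxE (big_pred1 m). Qed.

Hypothesis hw : forall r, yop (ytens L W) r.+1 i0 i1 *m w = 0.

Lemma eqA r (m' : 'I_d) :
  ytfull W r.+1 i0 i1 *m wv m' + (a - (m' : nat)%:R) *: (ytfull W r i0 i1 *m wv m')
  + cc m'.+1 *: (ytfull W r i1 i1 *m wv m'.+1) = 0.
Proof.
apply/matrixP => y' j; rewrite (ord1 j) !addmxE' !scalemxE' -keyA hw !mxE //.
Qed.

Lemma T01_0 : ytfull W 0 i0 i1 = 0.
Proof. exact: yf_off. Qed.

Lemma wv_top : forall n, (0 < n)%N -> wv n = 0.
Proof.
suff H : forall t n, (d <= n + t)%N -> (0 < n)%N -> wv n = 0.
  by move=> n; apply: (H d n); lia.
elim=> [|t IH] n hn n0; first by apply: wv_big; lia.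
have [hle|hlt] := leqP d (n + t); first exact: IH.
have nd : (n < d)%N by lia.
have n1d : (n.-1 < d)%N by lia.
have wv1 : wv n.+1 = 0 by apply: IH; lia.
have sg : forall r, ytfull W r.+1 i0 i1 *m wv n = 0.
  apply: (@sing_col _ _ (fun r => ytfull W r i0 i1) (wv n) (a - n%:R) T01_0) => r.
  by have := eqA r (Ordinal nd); rewrite /= wv1 mulmx0 scaler0 addr0.
have off : forall y, y != x0W -> wv n y 0 = 0 by apply: (g_A GW).
have e2 : forall r, (ytfull W r i1 i1 *m wv n) x0W 0 = (Pol be)`_r * wv n x0W 0.
  move=> r; rewrite mxE (bigD1 x0W) //= big1 ?addr0.
    by rewrite (g_eig2 GW) eqxx mul1r.
  by move=> y yn; rewrite off ?mulr0.
pose h r := (ytfull W r i0 i1 *m wv n.-1) x0W 0.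
have := @root_lemma F be h (a - (n.-1)%:R) (cc n * wv n x0W 0).
case.
- by rewrite /h T01_0 mul0mx mxE.
- by move=> r hr; rewrite /h Wbound // mul0mx mxE.
- move=> r; have := congr1 (fun M : 'cV[F]_(ydim W) => M x0W 0) (eqA r (Ordinal n1d)).
  rewrite /= !addmxE' !scalemxE' (prednK n0) e2 /h => e.
  transitivity ((0 : 'cV[F]_(ydim W)) x0W 0); last by rewrite mxE.
  rewrite -e; ring.
- move/eqP; rewrite mulf_eq0 (negPf (Hc _)) /=; last by rewrite n0.
  move/eqP => ex0; apply/matrixP => y j; rewrite (ord1 j) [RHS]mxE.
  by have [->|yn] := eqVneq y x0W; [exact: ex0 | exact: off].
- move=> hin; have := HA (m := n.-1); rewrite (prednK n0) hin => /(_ nd) //.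
Qed.

Lemma tA : forall k, k != x0T -> w k 0 = 0.
Proof.
have wv1 := wv_top (n := 1) isT.
have sg : forall r, ytfull W r.+1 i0 i1 *m wv 0 = 0.
  apply: (@sing_col _ _ (fun r => ytfull W r i0 i1) (wv 0) (a - 0%:R) T01_0) => r.
  by have := eqA r o; rewrite /= wv1 mulmx0 scaler0 addr0.
have off : forall y, y != x0W -> wv 0 y 0 = 0 by apply: (g_A GW).
move=> k; case: (mxtens_indexP k) => m y hk.
have [m0|mn0] := posnP m.
  have em : m = o by apply: val_inj.
  rewrite -(wv_entry m) em off //; apply: contra hk => /eqP ->; by rewrite em.
by rewrite -(wv_entry m) (wv_top mn0) mxE.
Qed.
End PartA.

Hypothesis HB : forall m, (m.+1 < d)%N -> b + m%:R \notin al.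

Section PartB.
Variable phi : 'rV[F]_(d * ydim W).
Definition pv (n : nat) : 'rV_(ydim W) :=
  \row_y \sum_(m < d | (m : nat) == n) phi 0 (mxtens_index (m, y)).

Lemma innerB (m : 'I_d) (A B C : F) (f : 'I_d -> F) :
  \sum_(m' < d) f m' * ((m' == m)%:R * A + (G i1 i0 m' m * B + G i1 i1 m' m * C)) =
  A * \sum_(m' < d | (m' : nat) == m) f m' + B * \sum_(m' < d | (m' : nat) == m.+1) f m'
  + (b + (m : nat)%:R) * (C * \sum_(m' < d | (m' : nat) == m) f m').
Proof.
rewrite (eq_bigr (fun m' : 'I_d =>
   ((if (m' : nat) == m then (fun _ => 1) (m' : nat) else 0) * A) * f m' +
   ((if (m' : nat) == m.+1 then (fun _ => 1) (m' : nat) else 0) * B) * f m' +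
   ((if (m' : nat) == m then (fun _ => b + (m : nat)%:R) (m' : nat) else 0) * C) * f m')); last first.
  move=> m' _; rewrite G10 G11 [(m : nat) == m']eq_sym.
  rewrite -[m' == m]/((m' : nat) == (m : nat)).
  by case: eqP => _ /=; case: eqP => _ /=; ring.
rewrite !big_split /= (sel_sum _ (fun _ => 1)) (sel_sum _ (fun _ => 1)).
rewrite (sel_sum _ (fun _ => b + (m : nat)%:R)); ring.
Qed.

Lemma keyB r (m : 'I_d) y :
  (phi *m yop (ytens L W) r.+1 i1 i0) 0 (mxtens_index (m, y)) =
  (pv m *m ytfull W r.+1 i1 i0) 0 y + (pv m.+1 *m ytfull W r i0 i0) 0 y
  + (b + (m : nat)%:R) * (pv m *m ytfull W r i1 i0) 0 y.
Proof.
rewrite mxE sum_tens exchange_big /=.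
rewrite (eq_bigr (fun y' => pv m 0 y' * ytfull W r.+1 i1 i0 y' y +
   pv m.+1 0 y' * ytfull W r i0 i0 y' y +
   (b + (m : nat)%:R) * (pv m 0 y' * ytfull W r i1 i0 y' y))); last first.
  move=> y' _.
  rewrite (eq_bigr (fun m' : 'I_d => phi 0 (mxtens_index (m', y')) *
     ((m' == m)%:R * ytfull W r.+1 i1 i0 y' y +
     (G i1 i0 m' m * ytfull W r i0 i0 y' y + G i1 i1 m' m * ytfull W r i1 i0 y' y)))); last first.
    by move=> m' _; rewrite (ytensL r) sum2.
  rewrite innerB !mxE; ring.
rewrite !big_split /= !mxE -!mulr_sumr.
done.
Qed.

Lemma pv_big n : (d <= n)%N -> pv n = 0.
Proof.
move=> hn; apply/matrixP => j y; rewrite !mxE big_pred0 // => m.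
apply/negbTE; rewrite neq_ltn; apply/orP; left; exact: leq_trans (ltn_ord m) hn.
Qed.

Lemma pv_entry (m : 'I_d) y : pv m 0 y = phi 0 (mxtens_index (m, y)).
Proof. by rewrite mxE (big_pred1 m). Qed.

Hypothesis hphi : forall r, phi *m yop (ytens L W) r.+1 i1 i0 = 0.

Lemma eqB r (m : 'I_d) :
  pv m *m ytfull W r.+1 i1 i0 + pv m.+1 *m ytfull W r i0 i0
  + (b + (m : nat)%:R) *: (pv m *m ytfull W r i1 i0) = 0.
Proof.
apply/matrixP => j y; rewrite (ord1 j) !addmxE' !scalemxE' -keyB hphi !mxE //.
Qed.

Lemma T10_0 : ytfull W 0 i1 i0 = 0.
Proof. exact: yf_off. Qed.

Lemma pv_top : forall n, (0 < n)%N -> pv n = 0.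
Proof.
suff H : forall t n, (d <= n + t)%N -> (0 < n)%N -> pv n = 0.
  by move=> n; apply: (H d n); lia.
elim=> [|t IH] n hn n0; first by apply: pv_big; lia.
have [hle|hlt] := leqP d (n + t); first exact: IH.
have nd : (n < d)%N by lia.
have n1d : (n.-1 < d)%N by lia.
have pv1 : pv n.+1 = 0 by apply: IH; lia.
have sg : forall r, pv n *m ytfull W r.+1 i1 i0 = 0.
  apply: (@sing_row _ _ (fun r => ytfull W r i1 i0) (pv n) (b + n%:R) T10_0) => r.
  by have := eqB r (Ordinal nd); rewrite /= pv1 mul0mx addr0.
have off : forall y, y != x0W -> pv n 0 y = 0 by apply: (g_B GW).
have e1 : forall r, (pv n *m ytfull W r i0 i0) 0 x0W = pv n 0 x0W * (Pol al)`_r.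
  move=> r; rewrite mxE (bigD1 x0W) //= big1 ?addr0.
    by rewrite (g_eig1 GW) eqxx mul1r.
  by move=> y yn; rewrite off ?mul0r.
pose h r := (pv n.-1 *m ytfull W r i1 i0) 0 x0W.
have := @root_lemma F al h (b + (n.-1)%:R) (pv n 0 x0W).
case.
- by rewrite /h T10_0 mulmx0 mxE.
- by move=> r hr; rewrite /h Wbound ?mulmx0 ?mxE // -(g_size GW).
- move=> r; have := congr1 (fun M : 'rV[F]_(ydim W) => M 0 x0W) (eqB r (Ordinal n1d)).
  rewrite /= !addmxE' !scalemxE' (prednK n0) e1 /h => e.
  transitivity ((0 : 'rV[F]_(ydim W)) 0 x0W); last by rewrite mxE.
  rewrite -e; ring.
- move=> ex0; apply/matrixP => j y; rewrite (ord1 j) [RHS]mxE.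
  by have [->|yn] := eqVneq y x0W; [exact: ex0 | exact: off].
- move=> hin; have := HB (m := n.-1); rewrite (prednK n0) hin => /(_ nd) //.
Qed.

Lemma tB : forall k, k != x0T -> phi 0 k = 0.
Proof.
have pv1 := pv_top (n := 1) isT.
have sg : forall r, pv 0 *m ytfull W r.+1 i1 i0 = 0.
  apply: (@sing_row _ _ (fun r => ytfull W r i1 i0) (pv 0) (b + 0%:R) T10_0) => r.
  by have := eqB r o; rewrite /= pv1 mul0mx addr0.
have off : forall y, y != x0W -> pv 0 0 y = 0 by apply: (g_B GW).
move=> k; case: (mxtens_indexP k) => m y hk.
have [m0|mn0] := posnP m.
  have em : m = o by apply: val_inj.
  rewrite -(pv_entry m) em off //; apply: contra hk => /eqP ->; by rewrite em.
by rewrite -(pv_entry m) (pv_top mn0) mxE.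
Qed.
End PartB.

Lemma step : @good F (ytens L W) (a :: al) (b :: be) tdeg x0T.
Proof.
split.
- by rewrite /= (g_size GW).
- exact: tbound.
- exact: tgrade.
- by rewrite /tdeg mxtens_indexK /= (g_x0 GW).
- exact: teig2.
- exact: teig1.
- by move=> w hw; apply: (@tA w hw).
- by move=> ph hp; apply: (@tB ph hp).
Qed.
End Step.

Section Fin.
Variable F : fieldType.
Variable p : nat.
Hypothesis hp : prime p.
Hypothesis hchar : p \in [pchar F].

Lemma triv_good : @good F (ytriv F) [::] [::] (fun _ => 0%N) ord0.
Proof.
split => //.
- move=> r i j x y; case: r => [|r]; first by move/yf0 => [_ ->].
  by rewrite /= mxE eqxx.
- move=> r x; rewrite (ord1 x) /Pol big_nil coefC.
  by case: r => [|r] /=; rewrite ?mxE ?mulr1 ?mul1r ?mulr0.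
- move=> r y; rewrite (ord1 y) /Pol big_nil coefC.
  by case: r => [|r] /=; rewrite ?mxE ?mulr1 ?mul1r ?mulr0.
- by move=> w _ y; rewrite (ord1 y) eqxx.
- by move=> w _ y; rewrite (ord1 y) eqxx.
Qed.

Lemma nat_neq0 n : (0 < n < p)%N -> (n%:R : F) != 0.
Proof.
move=> /andP [h1 h2]; rewrite -(dvdn_pcharf hchar); apply/negP => /dvdn_leq.
by move=> /(_ h1); lia.
Qed.

Lemma in_Fp_nat (x : F) n : (n < p)%N -> x = n%:R -> in_Fp p x /\ (Fp_rep p x <= n)%N.
Proof.
move=> np ->; have hin : in_Fp p (n%:R : F).
  by apply/hasP; exists n; rewrite ?mem_iota //=; lia.
split => //; rewrite leqNgt; apply/negP => /(before_find 0%N).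
by rewrite nth_iota //= add0n eqxx.
Qed.

Lemma Fp_rep_spec (x : F) : in_Fp p x -> (Fp_rep p x < p)%N /\ (Fp_rep p x)%:R = x.
Proof.
move=> h; have hs : (Fp_rep p x < p)%N by move: h; rewrite /in_Fp has_find size_iota.
split => //; have := nth_find 0%N h; rewrite nth_iota // add0n => /eqP.
done.
Qed.

Lemma Ldim_gt0 (a b : F) : (0 < Ldim p a b)%N.
Proof. by rewrite /Ldim; case: ifP => // _; apply: prime_gt0. Qed.

Lemma Ldim_le (a b : F) : (Ldim p a b <= p)%N.
Proof.
rewrite /Ldim; case: ifP => // h; exact: (Fp_rep_spec h).1.
Qed.

Lemma Ldim_c (a b : F) m : (0 < m < Ldim p a b)%N -> cc a b m != 0.
Proof.
move=> hm; have hmp : (m < p)%N by have := Ldim_le a b; lia.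
rewrite /cc mulf_neq0 //; first by apply: nat_neq0; lia.
move: hm; rewrite /Ldim; case: ifP => h hm.
  have [hr e] := Fp_rep_spec h.
  have -> : a - b - m%:R + 1 = (Fp_rep p (a - b) - m).+1%:R.
    by rewrite -addn1 natrD natrB ?e //; lia.
  by apply: nat_neq0; lia.
apply/negP => /eqP e.
have m0 : (0 < m)%N by lia.
have hm1 : (m%:R : F) = (m.-1)%:R + 1 by rewrite -[in LHS](prednK m0) -addn1 natrD.
have : a - b = (m.-1)%:R.
  have -> : a - b = (a - b - m%:R + 1) + (m.-1)%:R by rewrite hm1; ring.
  by rewrite e add0r.
move/(in_Fp_nat _); case; first by lia.
by rewrite h.
Qed.

Definition Lf (x : F * F) := Lmod p x.1 x.2.

Fixpoint Hyp (ab : seq (F * F)) : Prop :=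
  if ab is x :: ab' then Hyp ab' /\ forall m, (m.+1 < Ldim p x.1 x.2)%N ->
      x.1 - m%:R \notin unzip2 ab' /\ x.2 + m%:R \notin unzip1 ab'
  else True.

Lemma good_list ab : Hyp ab -> exists deg x0,
  @good F (foldr (@ytens F) (ytriv F) (map Lf ab)) (unzip1 ab) (unzip2 ab) deg x0.
Proof.
elim: ab => [|[a b] ab IH] /=; first by move=> _; exists (fun _ => 0%N), ord0; exact: triv_good.
move=> [/IH [deg [x0 GW]] hx].
eexists; eexists; apply: (@step F p a b _ _ _ _ _ GW (Ldim_gt0 a b)).
- by move=> m; apply: Ldim_c.
- by move=> m hm; case: (hx m hm).
- by move=> m hm; case: (hx m hm).
Qed.

Definition Cond (x y : F * F) := forall m, (m.+1 < Ldim p x.1 x.2)%N ->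
  x.1 - m%:R != y.2 /\ x.2 + m%:R != y.1.

Lemma Hyp_of (ab : seq (F * F)) z :
  (forall i l, (i < l < size ab)%N -> Cond (nth z ab i) (nth z ab l)) -> Hyp ab.
Proof.
elim: ab => [|x ab IH] //= H; split.
  by apply: IH => i l hil; apply: (H i.+1 l.+1).
move=> m hm; split.
- apply/negP => /mapP [y yin e].
  have := H 0%N (index y ab).+1; rewrite /= ltnS index_mem yin /= nth_index // => /(_ isT m hm) [].
  by rewrite e eqxx.
- apply/negP => /mapP [y yin e].
  have := H 0%N (index y ab).+1; rewrite /= ltnS index_mem yin /= nth_index // => /(_ isT m hm) [_].
  by rewrite e eqxx.
Qed.

End Fin.

End Aux.
Import Aux.

Theorem proposition3p2p3 (F : closedFieldType) (p : nat) (hp : prime p)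
  (hchar : p \in [pchar F])
  (halg : forall x : F, exists n : nat, (0 < n)%N /\ x ^+ (p ^ n) = x)
  (k : nat) (alpha beta : 'I_k -> F) :
  (forall i : 'I_k,
     (in_Fp p (alpha i - beta i) /\
      forall j l : 'I_k, (i <= j)%N -> (i <= l)%N -> in_Fp p (alpha j - beta l) ->
        (Fp_rep p (alpha i - beta i) <= Fp_rep p (alpha j - beta l))%N)
     \/
     (forall j l : 'I_k, (i <= j)%N -> (i <= l)%N -> ~~ in_Fp p (alpha j - beta l))) ->
  yirreducible (Ltensor p alpha beta).
Proof.
move=> H.
pose f := fun i : 'I_k => (alpha i, beta i).
pose ab := map f (enum 'I_k).
have hyp : Hyp p ab.
  apply: (@Hyp_of _ _ _ (0, 0)) => i l /andP [il lk].
  have sz : size ab = k by rewrite size_map size_enum_ord.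
  rewrite sz in lk.
  have ik : (i < k)%N by lia.
  pose I := Ordinal ik; pose J := Ordinal lk.
  have nthab : forall j (hj : (j < k)%N), nth (0, 0) ab j = f (Ordinal hj).
    move=> j hj; rewrite /ab (nth_map (Ordinal hj)) ?size_enum_ord //; congr f.
    by apply: val_inj; rewrite /= nth_enum_ord.
  rewrite (nthab i ik) (nthab l lk) -/I -/J.
  have IJ : (I <= J)%N by rewrite /= ltnW.
  move=> m; rewrite /f /= /Ldim.
  case: (H I) => [[hin mono] | hnot].
  - rewrite hin => hm.
    have [hr e] := Fp_rep_spec hin.
    have mp : (m < p)%N by rewrite ltnS in hm; exact: ltn_trans hm hr.
    rewrite ltnS in hm.
    split; apply/negP => /eqP ee.
    + have [hin2 hle] := @in_Fp_nat F p (alpha I - beta J) m mp ltac:(rewrite -ee; ring).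
      by move: (leq_ltn_trans (leq_trans (mono I J (leqnn _) IJ hin2) hle) hm); rewrite ltnn.
    + have [hin2 hle] := @in_Fp_nat F p (alpha J - beta I) m mp ltac:(rewrite -ee; ring).
      by move: (leq_ltn_trans (leq_trans (mono J I IJ (leqnn _) hin2) hle) hm); rewrite ltnn.
  - have hn := hnot I I (leqnn _) (leqnn _).
    rewrite (negPf hn) => hm.
    have mp : (m < p)%N by apply: ltnW.
    split; apply/negP => /eqP ee.
    + have [hin2 _] := @in_Fp_nat F p (alpha I - beta J) m mp ltac:(rewrite -ee; ring).
      by have := hnot I J (leqnn _) IJ; rewrite hin2.
    + have [hin2 _] := @in_Fp_nat F p (alpha J - beta I) m mp ltac:(rewrite -ee; ring).
      by have := hnot J I IJ (leqnn _); rewrite hin2.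
have [deg [x0 G]] := good_list hp hchar hyp.
rewrite /Ltensor.
have -> : [seq Lmod p (alpha i) (beta i) | i <- enum 'I_k] = map (Lf p) ab.
  by rewrite /ab; elim: (enum 'I_k) => //= x s ->.
exact: good_irr G.
Qed.
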